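(* For every integer $m\ge 3$, $M(3,m)=2(m-1)$.
   Context: All graphs are finite and simple. A path $v_1,\ldots,v_r$ in a graph $G$ is degree-monotone if $\deg_G(v_1)\le\cdots\le\deg_G(v_r)$; its order is $r$. Let $mp(G)$ be the maximum order of a degree-monotone path in $G$. For a $2$-edge-coloring of $K_n$ with colors $1,2$, let $G_j$ be the spanning subgraph consisting of the edges colored $j$ (degrees taken in $G_j$). $M(m_1,m_2)$ is the minimum integer $M$ such that for every $n\ge M$ and every $2$-edge-coloring of $K_n$, either $mp(G_1)\ge m_1$ or $mp(G_2)\ge m_2$. *)

(* Defs.v *)
From mathcomp Require Import all_boot all_order.
Set Implicit Arguments. Unset Strict Implicit. Unset Printing Implicit Defensive.

(* A simple graph on vertex set 'I_n is given by a symmetric irreflexive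
   relation e : rel 'I_n. *)

Definition gdeg (n : nat) (e : rel 'I_n) (v : 'I_n) : nat := #|[set u | e v u]|.

Definition dm_path (n : nat) (e : rel 'I_n) (s : seq 'I_n) : bool :=
  [&& uniq s,
      (if s is x :: s' then path e x s' else true)
    & sorted leq (map (gdeg e) s)].

(* mp(G): the maximum order of a degree-monotone path in G (paths have at
   most n vertices). *)
Definition mp (n : nat) (e : rel 'I_n) : nat :=
  \max_(k < n.+1 | [exists t : (val k).-tuple 'I_n, dm_path e t]) val k.

(* A 2-edge-colouring of K_n is a symmetric c : 'I_n -> 'I_n -> bool
   (colour 1 = true, colour 2 = false; the diagonal is irrelevant).
   G_j is the spanning subgraph of edges of colour j. *)
Definition colour_graph (n : nat) (c : 'I_n -> 'I_n -> bool) (b : bool) : rel 'I_n :=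
  fun u v => (u != v) && (c u v == b).

Definition ramsey_mp_prop (m1 m2 M : nat) : Prop :=
  forall n : nat, M <= n ->
  forall c : 'I_n -> 'I_n -> bool, (forall u v, c u v = c v u) ->
    m1 <= mp (colour_graph c true) \/ m2 <= mp (colour_graph c false).

Definition is_M (m1 m2 M : nat) : Prop :=
  ramsey_mp_prop m1 m2 M /\ forall M', ramsey_mp_prop m1 m2 M' -> M <= M'.

(* Main.v *)
Require Import Defs.
From mathcomp Require Import all_boot all_order zify.
Set Implicit Arguments. Unset Strict Implicit. Unset Printing Implicit Defensive.


Lemma uniq_size_le (n : nat) (s : seq 'I_n) : uniq s -> size s <= n.
Proof.
move=> us; rewrite -(card_uniqP us).
by rewrite -[X in _ <= X](card_ord n) max_card.
Qed.

Lemma dm_le_mp (n : nat) (e : rel 'I_n) (s : seq 'I_n) :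
  dm_path e s -> size s <= mp e.
Proof.
move=> h.
have hs : size s < n.+1 by rewrite ltnS uniq_size_le //; case/and3P: h.
rewrite /mp.
apply: (@leq_bigmax_cond _ _ (fun k : 'I_n.+1 => val k) (Ordinal hs)).
by apply/existsP; exists (in_tuple s).
Qed.

Lemma mp_le (n : nat) (e : rel 'I_n) (b : nat) :
  (forall s : seq 'I_n, dm_path e s -> size s <= b) -> mp e <= b.
Proof.
move=> h; rewrite /mp; apply/bigmax_leqP => k /existsP [t ht].
by rewrite -(size_tuple t); apply: h.
Qed.


Lemma card_lt_ord (n k : nat) : k <= n -> #|[set u : 'I_n | u < k]| = k.
Proof.
move=> kn.
have -> : [set u : 'I_n | u < k] = [set widen_ord kn i | i in 'I_k].
  apply/setP=> u; rewrite !inE; apply/idP/imsetP => [uk|[i _ ->]]; last exact: ltn_ord i.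
  by exists (Ordinal uk) => //; apply: val_inj.
rewrite card_imset ?card_ord //.
by move=> i j /(congr1 val) /= h; apply: val_inj.
Qed.

Section Lower.
Variables (n k : nat).
Let A : {set 'I_n} := [set u : 'I_n | u < k].
Definition lcol (u v : 'I_n) : bool := (u \in A) != (v \in A).

Lemma lcol_sym u v : lcol u v = lcol v u.
Proof. by rewrite /lcol eq_sym. Qed.

Lemma deg_lcol1 v : gdeg (colour_graph lcol true) v = if v \in A then #|~: A| else #|A|.
Proof.
rewrite /gdeg.
have -> : [set u | colour_graph lcol true v u] = if v \in A then ~: A else A.
  apply/setP => u; rewrite /colour_graph /lcol.
  rewrite inE; case: (v =P u) => [<-|/eqP nvu] /=; first by case vA: (v \in A); rewrite ?in_setC vA.
  by case vA: (v \in A); case uA: (u \in A); rewrite ?in_setC ?uA ?vA.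
by case: (v \in A).
Qed.

Hypothesis nodd : odd n.

Lemma lower1 : mp (colour_graph lcol true) <= 2.
Proof.
apply: mp_le => s; rewrite /dm_path.
case: s => [|x [|y [|z s]]] //= /and3P [/= hu /and3P [hxy hyz _] hs].
exfalso.
move: hu; rewrite !inE negb_or => /andP [/andP [nxy /norP [nxz _]] _].
move: hxy hyz hs; rewrite /colour_graph /lcol /= => /andP [_ /eqP hxy] /andP [_ /eqP hyz].
rewrite !deg_lcol1 => /and3P [d1 d2 _].
have hc : #|A| + #|~: A| = n by rewrite cardsC card_ord.
 move: nodd; rewrite -hc.
have xz : (x \in A) = (z \in A) by case: (x \in A) (y \in A) (z \in A) hxy hyz => [] [] [].
rewrite -xz in d2.
have e : (if x \in A then #|~: A| else #|A|) = (if y \in A then #|~: A| else #|A|)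
  by apply/eqP; rewrite eqn_leq d1 d2.
by case: (x \in A) (y \in A) hxy e => [] [] //= _ ->; rewrite addnn odd_double.
Qed.

Lemma path_same x s : path (colour_graph lcol false) x s -> all (fun y => (y \in A) == (x \in A)) s.
Proof.
elim: s x => [|y s IH] x //= /andP [/andP [_ /eqP h] /IH hs].
have hyx : (y \in A) = (x \in A) by move: h; rewrite /lcol; case: (x \in A) (y \in A) => [] [].
rewrite hyx eqxx /=; by rewrite hyx in hs.
Qed.

Lemma lower2 b : #|A| <= b -> #|~: A| <= b -> mp (colour_graph lcol false) <= b.
Proof.
move=> hA hC; apply: mp_le => s; rewrite /dm_path.
case: s => [|x s] // /and3P [hu hp _].
have hall := path_same hp.
rewrite -(card_uniqP hu).
case xA: (x \in A).
- apply: leq_trans hA; apply: subset_leq_card; apply/subsetP => y.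
  rewrite in_cons => /predU1P [->//|ys]; by move/allP: hall => /(_ y ys); rewrite xA => /eqP ->.
- apply: leq_trans hC; apply: subset_leq_card; apply/subsetP => y.
  rewrite in_cons => /predU1P [->|ys]; first by rewrite in_setC xA.
  by move/allP: hall => /(_ y ys); rewrite xA in_setC => /eqP ->.
Qed.
End Lower.


Lemma fiber2 (T : finType) (k : nat) (f : T -> 'I_k) :
  (forall j, #|[set x | f x == j]| <= 2) -> 2 * k <= #|T| ->
  forall j, #|[set x | f x == j]| = 2.
Proof.
move=> hle hT j.
have hs : #|T| = \sum_(i < k) #|[set x | f x == i]|.
  rewrite -sum1_card (partition_big f predT) //=.
  by apply: eq_bigr => i _; rewrite sum1dep_card.
rewrite (bigD1 j) //= in hs.
have hb : \sum_(i < k | i != j) #|[set x | f x == i]| <= 2 * k.-1.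
  apply: leq_trans (_ : \sum_(i < k | i != j) 2 <= _).
    by apply: leq_sum => i _.
  by rewrite sum_nat_const cardC1 card_ord mulnC.
have := hle j; have : 0 < k by apply: leq_ltn_trans (ltn_ord j).
move: hs hb hT; move: (#|[set x | f x == j]|) (\sum_(i < k | i != j) #|[set x | f x == i]|) (#|T|) => a b t.
lia.
Qed.

Lemma three_elems (T : finType) (S : {set T}) : 2 < #|S| ->
  exists x y z, [/\ x \in S, y \in S, z \in S & [/\ x != y, y != z & x != z]].
Proof.
move=> h.
have /card_gt0P [x xS] : 0 < #|S| by lia.
have := cardsD1 x S; rewrite xS => h1.
have /card_gt0P [y yS] : 0 < #|S :\ x| by lia.
have := cardsD1 y (S :\ x); rewrite yS => h2.
have /card_gt0P [z zS] : 0 < #|S :\ x :\ y| by lia.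
move: yS zS; rewrite !inE => /andP [yx yS] /and3P [zy zx zS].
by exists x, y, z; split => //; split; rewrite // eq_sym.
Qed.


Section Upper.
Variables (n m : nat) (c : 'I_n -> 'I_n -> bool).
Hypothesis csym : forall u v, c u v = c v u.
Local Notation G1 := (colour_graph c true).
Local Notation G2 := (colour_graph c false).
Local Notation d1 := (gdeg G1).
Local Notation d2 := (gdeg G2).

Lemma Gsym b x y : colour_graph c b x y = colour_graph c b y x.
Proof. by rewrite /colour_graph eq_sym csym. Qed.

Lemma G12 x y : x != y -> G1 x y = ~~ G2 x y.
Proof. by rewrite /colour_graph => ->; case: (c x y). Qed.

Lemma Gneq b x y : colour_graph c b x y -> x != y.
Proof. by case/andP. Qed.

Lemma d12 v : d1 v + d2 v = n.-1.
Proof.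
rewrite /gdeg -cardsUI.
have -> : [set u | G1 v u] :&: [set u | G2 v u] = set0.
  apply/setP => u; rewrite !inE /colour_graph.
  by case: (v != u); case: (c v u).
have -> : [set u | G1 v u] :|: [set u | G2 v u] = [set~ v].
  apply/setP => u; rewrite !inE /colour_graph eq_sym.
  by case: (u != v); case: (c v u).
by rewrite cards0 addn0 cardsC1 card_ord.
Qed.

Hypothesis h1 : mp G1 < 3.

Lemma L3 x y z : G1 x y -> G1 y z -> x != z -> d1 x <= d1 y -> d1 y <= d1 z -> False.
Proof.
move=> hxy hyz nxz dxy dyz.
have : dm_path G1 [:: x; y; z].
  rewrite /dm_path /= hxy hyz dxy dyz !inE !negb_or nxz (Gneq hxy) (Gneq hyz).
  done.
by move/dm_le_mp => /= h; move: (leq_ltn_trans h h1).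
Qed.

Lemma triangle x y z : G1 x y -> G1 y z -> G1 x z -> False.
Proof.
move=> hxy hyz hxz.
have hyx : G1 y x by rewrite Gsym.
have hzy : G1 z y by rewrite Gsym.
have hzx : G1 z x by rewrite Gsym.
have nxy := Gneq hxy; have nyz := Gneq hyz; have nxz := Gneq hxz.
have nyx : y != x by rewrite eq_sym. have nzy : z != y by rewrite eq_sym.
have nzx : z != x by rewrite eq_sym.
case: (leqP (d1 x) (d1 y)) => a; case: (leqP (d1 y) (d1 z)) => b.
- exact: (L3 hxy hyz nxz).
- case: (leqP (d1 x) (d1 z)) => e.
  + exact: (L3 hxz hzy nxy e (ltnW b)).
  + exact: (L3 hzx hxy nzy (ltnW e) a).
- case: (leqP (d1 x) (d1 z)) => e.
  + exact: (L3 hyx hxz nyz (ltnW a) e).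
  + exact: (L3 hyz hzx nyx b (ltnW e)).
- exact: (L3 hzy hyx nzx (ltnW b) (ltnW a)).
Qed.

Lemma F3 x y : G1 x y -> d1 x = d1 y -> d1 y <= 1.
Proof.
move=> hxy e; rewrite leqNgt; apply/negP => h2.
have := cardsD1 x [set u | G1 y u]; rewrite inE Gsym hxy /= => h.
have /card_gt0P [z] : 0 < #|[set u | G1 y u] :\ x|.
  move: h h2; rewrite /gdeg; move: (#|_|) (#|_|) => a b; lia.
rewrite !inE => /andP [nzx hyz].
have nxz : x != z by rewrite eq_sym.
have nzx' := nzx.
case: (leqP (d1 y) (d1 z)) => a.
- exact: (L3 hxy hyz nxz (eq_leq e) a).
- have hzy : G1 z y by rewrite Gsym.
  have hyx : G1 y x by rewrite Gsym.
  exact: (L3 hzy hyx nzx (ltnW a) (eq_leq (esym e))).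
Qed.

Definition key (v : 'I_n) := d1 v * n + v.

Lemma key_inj x y : key x = key y -> x = y.
Proof.
rewrite /key => h; apply: val_inj => /=.
have := congr1 (modn^~ n) h; rewrite /= !modnMDl !modn_small //.
Qed.

Lemma keyd x y : key x < key y -> d1 x <= d1 y.
Proof.
rewrite /key => h; rewrite leqNgt; apply/negP => h'.
have := ltn_ord y; have := ltn_ord x.
move: h h'; move: (d1 x) (d1 y) (nat_of_ord x) (nat_of_ord y) => a b p q; nia.
Qed.

Lemma F2 x y z : G1 x y -> G1 y z -> key x < key y -> key y < key z -> False.
Proof.
move=> hxy hyz kxy kyz.
have nxz : x != z by apply/eqP => exz; move: (ltn_trans kxy kyz); rewrite exz ltnn.
exact: (L3 hxy hyz nxz (keyd kxy) (keyd kyz)).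
Qed.

Hypothesis h2 : mp G2 < m.

Definition R (x y : 'I_n) := (key y < key x) && G2 x y.
Definition chain (s : seq 'I_n) := sorted R s.

Lemma chain_uniq s : chain s -> uniq s.
Proof.
move=> h; apply: (@sorted_uniq _ (relpre key (fun a b => b < a))).
- by move=> y x z /= a b; apply: ltn_trans b a.
- by move=> x /=; rewrite ltnn.
by apply: sub_sorted h => x y /andP [].
Qed.

Lemma chain_dm s : chain s -> dm_path G2 s.
Proof.
move=> h; rewrite /dm_path chain_uniq //=.
apply/andP; split.
  by case: s h => [|x s] //= h; apply: sub_path h => a b /andP [].
rewrite sorted_map; apply: sub_sorted h => x y /andP [kyx _] /=.
have e1 := d12 x; have e2 := d12 y; have := keyd kyx.
move: e1 e2; move: (d1 x) (d2 x) (d1 y) (d2 y) => a b p q; lia.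
Qed.

Lemma chain_size s : chain s -> size s < m.
Proof. by move/chain_dm/dm_le_mp => h; apply: leq_ltn_trans h h2. Qed.

Definition lev (v : 'I_n) : nat :=
  \max_(k < n.+1 | [exists t : (val k).-tuple 'I_n, chain t && (ohead t == Some v)]) val k.

Lemma lev_ub v s : chain s -> ohead s = Some v -> size s <= lev v.
Proof.
move=> hc ho.
have hs : size s < n.+1 by rewrite ltnS uniq_size_le // chain_uniq.
rewrite /lev.
apply: (@leq_bigmax_cond _ _ (fun k : 'I_n.+1 => val k) (Ordinal hs)).
by apply/existsP; exists (in_tuple s); rewrite /= hc ho eqxx.
Qed.

Lemma lev_ge1 v : 1 <= lev v.
Proof. by have := @lev_ub v [:: v]; apply. Qed.

Lemma lev_wit v : exists s, [/\ chain s, ohead s = Some v & size s = lev v].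
Proof.
set P := (fun k : 'I_n.+1 => [exists t : (val k).-tuple 'I_n, chain t && (ohead t == Some v)]).
have hs : 1 < n.+1 by rewrite ltnS (leq_ltn_trans (leq0n v) (ltn_ord v)).
have hP : 0 < #|P|.
  apply/card_gt0P; exists (Ordinal hs); rewrite unfold_in /P /=.
  by apply/existsP; exists (in_tuple [:: v]); rewrite /= eqxx.
case: (eq_bigmax_cond (fun k : 'I_n.+1 => val k) hP) => i0 Hi0 Heq.
have e : lev v = val i0 := Heq.
move: Hi0; rewrite unfold_in /P /= => /existsP [t /andP [ht /eqP ho]].
by exists t; rewrite e size_tuple.
Qed.

Lemma lev_lt v : lev v < m.
Proof.
by have [s [hc _ <-]] := lev_wit v; apply: chain_size.
Qed.

Lemma lev_step u v : key u < key v -> G2 v u -> lev u < lev v.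
Proof.
move=> k g.
have [s [hc ho hs]] := lev_wit u.
case: s hc ho hs => [|x s] //= hc [ex] hs; subst x.
rewrite -hs; apply: (@lev_ub v (v :: u :: s)) => //.
by rewrite /chain /= /R k g.
Qed.

Lemma samelev u v : u != v -> lev u = lev v -> G1 u v.
Proof.
move=> nuv e; rewrite G12 //; apply/negP => g.
case: (ltngtP (key u) (key v)) => k.
- by move: (lev_step k (etrans (Gsym false v u) g)); rewrite e ltnn.
- by move: (lev_step k g); rewrite e ltnn.
- by move: nuv; rewrite (key_inj k) eqxx.
Qed.

Lemma forced u v : key u < key v -> lev v <= lev u -> G1 u v.
Proof.
move=> k l.
have nuv : u != v by apply/eqP => e; move: k; rewrite e ltnn.
rewrite G12 //; apply/negP => g.
have := lev_step k (etrans (Gsym false v u) g); lia.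
Qed.

Hypothesis hm : 3 <= m.
Hypothesis hn : 2 * (m - 1) <= n.

Lemma fl_proof v : (lev v).-1 < m.-1.
Proof. have := lev_ge1 v; have := lev_lt v; lia. Qed.

Definition fl v : 'I_(m.-1) := Ordinal (fl_proof v).

Lemma fl_eq u v : (fl u == fl v) = (lev u == lev v).
Proof.
have := lev_ge1 u; have := lev_ge1 v.
rewrite -val_eqE /=; move: (lev u) (lev v) => a b ha hb.
by apply/eqP/eqP; lia.
Qed.

Lemma class_le2 j : #|[set x | fl x == j]| <= 2.
Proof.
rewrite leqNgt; apply/negP => /three_elems [x [y [z [hx hy hz [nxy nyz nxz]]]]].
move: hx hy hz; rewrite !inE => /eqP ex /eqP ey /eqP ez.
have lxy : lev x = lev y by apply/eqP; rewrite -fl_eq ex ey.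
have lyz : lev y = lev z by apply/eqP; rewrite -fl_eq ey ez.
apply: (triangle (samelev nxy lxy) (samelev nyz lyz) (samelev nxz (etrans lxy lyz))).
Qed.

Lemma classes2 j : #|[set x | fl x == j]| = 2.
Proof.
apply: fiber2 => //; first exact: class_le2.
rewrite card_ord; lia.
Qed.

Lemma partner_ex v : exists w, (w != v) && (lev w == lev v).
Proof.
have := cardsD1 v [set x | fl x == fl v]; rewrite classes2 inE eqxx => h.
have /card_gt0P [w] : 0 < #|[set x | fl x == fl v] :\ v| by lia.
by rewrite !inE fl_eq => hw; exists w.
Qed.

Definition pt v := odflt v [pick w | (w != v) && (lev w == lev v)].

Lemma ptP v : pt v != v /\ lev (pt v) = lev v.
Proof.
rewrite /pt; case: pickP => [w /andP [h /eqP e]|none] //=.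
by exfalso; have [w /andP [e1 e2]] := partner_ex v; move: (none w); rewrite e1 e2.
Qed.

Lemma G1pt v : G1 v (pt v).
Proof. have [h e] := ptP v; apply: samelev; [by rewrite eq_sym | by rewrite e]. Qed.

Lemma deg1_uniq x u w : d1 x <= 1 -> G1 x u -> G1 x w -> u = w.
Proof.
move=> hd hu hw; apply/eqP; apply: contraTT hd => nuw.
rewrite -ltnNge.
have : [set u; w] \subset [set y | G1 x y].
  by apply/subsetP => y; rewrite !inE => /orP [] /eqP ->.
move/subset_leq_card; rewrite cards2 nuw /gdeg => h; exact: h.
Qed.

Lemma core J : (forall u, lev u < J -> d1 u <= 1) ->
  forall p q, lev p = J -> lev q = J -> key p < key q -> d1 q <= 1.
Proof.
move=> IH p q lp lq kpq.
have gpq : G1 p q by apply: forced => //; rewrite lp lq.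
have low : forall u, lev u < J -> ~~ G1 u q.
  move=> u lu; apply/negP => g.
  have e := deg1_uniq (IH u lu) (G1pt u) g.
  by move: lu; rewrite -lq -e (ptP u).2 ltnn.
pose B := [set u | (key u < key q) && (J <= lev u)].
have pB : p \in B by rewrite inE kpq lp leqnn.
have NqB : [set u | G1 q u] \subset B.
  apply/subsetP => u; rewrite !inE => g.
  apply/andP; split.
    case: (ltngtP (key u) (key q)) => // k.
      by exfalso; apply: (F2 gpq g kpq k).
    by move: (Gneq g); rewrite (key_inj k) eqxx.
  rewrite leqNgt; apply/negP => lu; move: (low u lu); by rewrite Gsym g.
have dq : d1 q <= #|B| by apply: subset_leq_card.
case: (@arg_maxnP _ p (fun u => u \in B) key pB) => r rB rmax.
have krq : key r < key q by move: rB; rewrite inE => /andP [].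
have Jr : J <= lev r by move: rB; rewrite inE => /andP [].
have grq : G1 r q by apply: forced => //; rewrite lq.
have Binj : forall b1 b2, b1 \in B -> b2 \in B -> lev b1 = lev b2 -> b1 = b2.
  move=> b1 b2 hb1 hb2 e; apply/eqP; apply/negP => /negP nb.
  have g := samelev nb e.
  have gq : forall b, b \in B -> G1 b q.
    by move=> b; rewrite inE => /andP [kb Jb]; apply: forced => //; rewrite lq.
  case: (ltngtP (key b1) (key b2)) => k.
  - by apply: (F2 g (gq _ hb2) k); move: hb2; rewrite inE => /andP [].
  - by apply: (F2 (etrans (Gsym _ _ _) g) (gq _ hb1) k); move: hb1; rewrite inE => /andP [].
  - by move: nb; rewrite (key_inj k) eqxx.
have Blev : forall b, b \in B -> lev b <= lev r.
  move=> b hb; case: (b =P r) => [-> //|/eqP nbr].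
  have kbr : key b < key r.
    have hle : key b <= key r := rmax b hb.
    rewrite ltn_neqAle hle andbT; apply/eqP => e.
    by move: nbr; rewrite (key_inj e) eqxx.
  rewrite leqNgt; apply/negP => l.
  exact: (F2 (forced kbr (ltnW l)) grq kbr krq).
have sub : pt @: B \subset [set u | G1 r u].
  apply/subsetP => w /imsetP [b hb ->]; rewrite inE.
  have [nb lb] := ptP b.
  have nB : pt b \notin B.
    apply/negP => h; move: nb; by rewrite (Binj _ _ h hb lb) eqxx.
  have kw : key r < key (pt b).
    move: nB; rewrite inE lb; move: hb; rewrite inE => /andP [_ ->].
    rewrite andbT -leqNgt => h; exact: leq_trans krq h.
  by apply: forced kw _; rewrite lb Blev.
have dr : #|B| <= d1 r.
  rewrite -(card_in_imset (f := pt)); first exact: subset_leq_card.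
  move=> b1 b2 hb1 hb2 e; apply: Binj => //.
  by rewrite -(ptP b1).2 e (ptP b2).2.
have drq := keyd krq.
apply: (F3 grq); apply/eqP; rewrite eqn_leq drq.
exact: leq_trans dq dr.
Qed.

Lemma all_deg1 v : d1 v <= 1.
Proof.
suff : forall J u, lev u < J -> d1 u <= 1 by apply; apply: ltnSn.
elim=> [|J IH] u lu //.
case: (ltngtP (lev u) J) => l; first exact: IH.
  by move: lu; rewrite ltnS leqNgt l.
have [nw lw] := ptP u.
case: (ltngtP (key u) (key (pt u))) => k.
- apply: leq_trans (keyd k) _.
  by apply: (core IH (p := u)) => //; rewrite lw.
- by apply: (core IH (p := pt u)) => //; rewrite lw.
- by move: nw; rewrite -(key_inj k) eqxx.
Qed.

Lemma chain_lt x s : chain (x :: s) -> forall y, y \in s -> lev y < lev x.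
Proof.
elim: s x => [|z s IH] x //= /andP [/andP [kzx gxz] hp] y.
have lz := lev_step kzx gxz.
rewrite inE => /predU1P [-> //|ys].
exact: ltn_trans (IH z hp y ys) lz.
Qed.

Lemma sorted_true (T : Type) (s : seq T) : sorted (fun _ _ => true) s.
Proof. by case: s => //= x s; elim: s x => //= y s IH x; apply: IH. Qed.

Lemma d1_ge1 x : 1 <= d1 x.
Proof. by apply/card_gt0P; exists (pt x); rewrite inE G1pt. Qed.

Lemma upper_false : False.
Proof.
have hj : m.-2 < m.-1 by lia.
have /card_gt0P [v] : 0 < #|[set x | fl x == Ordinal hj]| by rewrite classes2.
rewrite inE -val_eqE /= => /eqP lv.
have lvm : lev v = m.-1 by have := lev_ge1 v; lia.
have [s [hc ho hs]] := lev_wit v.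
case: s hc ho hs => [|x s'] //= hc [ex] hs; subst x.
have hc0 : chain (v :: s') := hc.
have [nb lb] := ptP v.
have gbv : G1 (pt v) v by rewrite Gsym G1pt.
have db := all_deg1 (pt v).
have bs : pt v \notin s'.
  by apply/negP => h; have := chain_lt hc0 h; rewrite lb ltnn.
have us := chain_uniq hc0.
have hdm : dm_path G2 (rcons (v :: s') (pt v)).
  rewrite /dm_path; apply/and3P; split.
  - by rewrite rcons_uniq us andbT inE negb_or bs andbT.
  - rewrite /= rcons_path; apply/andP; split.
      by have := chain_dm hc0; case/and3P.
    case: s' hc hc0 hs bs us => [|z s''] hc hc0 hs bs us.
      by move: hs; rewrite lvm /=; lia.
    have ym : last z s'' \in z :: s'' by apply: mem_last.
    have nyb : last z s'' != pt v by apply/eqP => e; move: bs; rewrite -e ym.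
    suff : ~~ G1 (last z s'') (pt v) by rewrite G12 // negbK.
    apply/negP => g.
    have e := deg1_uniq db gbv (etrans (Gsym _ _ _) g).
    by move: us; rewrite /= e ym.
  - rewrite sorted_map; apply: sub_sorted (sorted_true _) => x y _ /=.
    have := d12 x; have := d12 y; have := all_deg1 x; have := all_deg1 y.
    have := d1_ge1 x; have := d1_ge1 y.
    move: (d1 x) (d1 y) (d2 x) (d2 y) => a b p q; lia.
have := dm_le_mp hdm; rewrite size_rcons /= hs lvm.
move: h2; move: (mp G2) => k; lia.
Qed.

End Upper.

Theorem theorem1p4 (m : nat) : 3 <= m -> is_M 3 m (2 * (m - 1)).
Proof.
move=> hm; split.
- move=> n hn c csym.
  case: (leqP 3 (mp (colour_graph c true))) => [h|h1]; first by left.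
  case: (leqP m (mp (colour_graph c false))) => [h|h2]; first by right.
  by exfalso; exact: (upper_false csym h1 h2 hm hn).
- move=> M' hM'; rewrite leqNgt; apply/negP => lt.
  pose N := (2 * (m - 1)).-1.
  have hN : M' <= N by rewrite /N; lia.
  have hodd : odd N.
    have -> : N = (m - 2).*2.+1 by rewrite /N -muln2; lia.
    by rewrite /= odd_double.
  have hk : m - 2 <= N by rewrite /N; lia.
  have cA := card_lt_ord hk.
  have cC : #|~: [set u : 'I_N | u < m - 2]| = m - 1.
    have := cardsC [set u : 'I_N | u < m - 2]; rewrite card_ord cA /N; lia.
  case: (hM' N hN (@lcol N (m - 2)) (@lcol_sym N (m - 2))) => h.
  + by have := @lower1 N (m - 2) hodd; lia.
  + have := @lower2 N (m - 2) (m - 1); rewrite cA cC => /(_ _ (leqnn _)).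
    by move=> /(_ ltac:(lia)); lia.
Qed.
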